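(* Let $n\ge1$ and let $f,g_1$ be as defined in the context. The set $\{v\in\mathbb{R}^{n+1}: g_1(v)=0,\ \sum_i v_i=0,\ \sum_i v_i^2=1\}$ equals $\{v\in\mathbb{R}^{n+1}:\sigma_1(v)=0,\ \sigma_2(v)=-\tfrac12,\ \sigma_3(v)=0\}$, and on this set $f=\frac{9(n-1)}{8(n+1)}-\sigma_4$. Consequently, finding the critical points (local extrema) of the minimization problem $\min f$ subject to $g_1=0$, $\sum_i v_i=0$, $\sum_i v_i^2=1$ is equivalent to finding the critical points of the problem $\max\sigma_4$ subject to $\sigma_1=0$, $\sigma_2=-\frac12$, $\sigma_3=0$.
   Context: For $v=(v_1,\dots,v_{n+1})$, $\sigma_k$ denotes the $k$-th elementary symmetric polynomial in $v_1,\dots,v_{n+1}$ ($\sigma_k=0$ for $k>n+1$), and $P=\sum_j v_j^2$. Define $u_i(v)=\frac{2+P}{2(n+1)}-\frac{v_i^2}{2}$, $\tilde u_i(v)=\frac{3P}{2(n+1)}-\frac{v_i^2}{2}$, $f(v)=\sum_i u_i(v)^2-2u_{n+1}(v)+1-v_{n+1}^2$ and $g_1(v)=\sum_i\tilde u_i(v)v_i$. The minimization problem describes the squared radii of circumscribing cylinders of the regular simplex with vertices $e_1,\dots,e_{n+1}$ in the hyperplane $\sum x_i=1$ of $\mathbb{R}^{n+1}$, with axis direction $v$. *)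

(* Defs.v *)
(* R is an arbitrary real field; vectors of R^(n+1) are
   functions 'I_(n.+1) -> R (index n+1 of the paper = ord_max). *)
From mathcomp Require Import all_boot all_order all_algebra.
Set Implicit Arguments. Unset Strict Implicit. Unset Printing Implicit Defensive.
Import Order.TTheory GRing.Theory Num.Theory.
Local Open Scope ring_scope.

Section Defs.
Variable R : realFieldType.

Definition elsym (m k : nat) (v : 'I_m -> R) : R :=
  \sum_(A : {set 'I_m} | #|A| == k) \prod_(i in A) v i.

Variable n : nat.

Definition Psq (v : 'I_n.+1 -> R) : R := \sum_j v j ^+ 2.

Definition u (v : 'I_n.+1 -> R) (i : 'I_n.+1) : R :=
  (2 + Psq v) / (2 * n.+1%:R) - v i ^+ 2 / 2.

Definition ut (v : 'I_n.+1 -> R) (i : 'I_n.+1) : R :=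
  3 * Psq v / (2 * n.+1%:R) - v i ^+ 2 / 2.

Definition fobj (v : 'I_n.+1 -> R) : R :=
  \sum_i u v i ^+ 2 - 2 * u v ord_max + 1 - v ord_max ^+ 2.

Definition g1 (v : 'I_n.+1 -> R) : R := \sum_i ut v i * v i.

Definition Sorig (v : 'I_n.+1 -> R) : Prop :=
  g1 v = 0 /\ \sum_i v i = 0 /\ Psq v = 1.

Definition Ssym (v : 'I_n.+1 -> R) : Prop :=
  elsym 1%N v = 0 /\ elsym 2%N v = - (1 / 2) /\ elsym 3%N v = 0.

Definition dist2 (v w : 'I_n.+1 -> R) : R := \sum_i (w i - v i) ^+ 2.

Definition loc_min_on (S : ('I_n.+1 -> R) -> Prop) (F : ('I_n.+1 -> R) -> R)
  (v : 'I_n.+1 -> R) : Prop :=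
  S v /\ exists eps : R, 0 < eps /\
    forall w, S w -> dist2 v w < eps -> F v <= F w.

Definition loc_max_on (S : ('I_n.+1 -> R) -> Prop) (F : ('I_n.+1 -> R) -> R)
  (v : 'I_n.+1 -> R) : Prop :=
  S v /\ exists eps : R, 0 < eps /\
    forall w, S w -> dist2 v w < eps -> F w <= F v.

End Defs.

(* Main.v *)
Require Import Defs.
From mathcomp Require Import all_boot all_order all_algebra.
From mathcomp Require Import mpoly.
Import Order.TTheory GRing.Theory Num.Theory.
Local Open Scope ring_scope.
From mathcomp Require Import ring lra.

Section S.
Variable R : realFieldType.

Lemma elsym_meval m k (v : 'I_m -> R) : elsym k v = (mesym m R k).@[v].
Proof.
rewrite /elsym /mesym raddf_sum /=; apply: eq_bigr => A _.
by rewrite rmorph_prod /=; apply: eq_bigr => i _; rewrite mevalXU.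
Qed.

Lemma mwidenXU m (i : 'I_m) : mwiden ('X_i : {mpoly R[m]}) = 'X_(widen_ord (leqnSn m) i).
Proof. by rewrite mwidenX mnmwiden1. Qed.

Lemma elsymSS m k (v : 'I_m.+1 -> R) :
  elsym k.+1 v = elsym k.+1 (fun i => v (widen_ord (leqnSn m) i))
     + v ord_max * elsym k (fun i => v (widen_ord (leqnSn m) i)).
Proof.
rewrite !elsym_meval mesymSS mevalD mevalM mevalXU mulrC; congr (_ + _ * _).
all: rewrite /mesym (big_morph _ (@mwidenD _ _) (@mwiden0 _ _)) !raddf_sum /=; apply: eq_bigr => A _.
all: rewrite (big_morph _ (@mwidenM _ _) (@mwiden1 _ _)) !rmorph_prod /=; apply: eq_bigr => i _.
all: by rewrite mwidenXU !mevalXU.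
Qed.

Lemma elsym0 m (v : 'I_m -> R) : elsym 0 v = 1.
Proof. by rewrite elsym_meval mesym0E meval1. Qed.

Lemma elsym_0 k (v : 'I_0 -> R) : elsym k.+1 v = 0.
Proof. by rewrite elsym_meval mesym_geqnE // meval0. Qed.

Arguments elsym {R m}.
Definition ps {m} (k : nat) (v : 'I_m -> R) := \sum_i v i ^+ k.

Lemma newton m (v : 'I_m -> R) :
  [/\ elsym 1%N v = ps 1 v,
      elsym 2%N v = (ps 1 v ^+ 2 - ps 2 v) / 2,
      elsym 3%N v = (ps 1 v ^+ 3 - 3 * ps 1 v * ps 2 v + 2 * ps 3 v) / 6 &
      elsym 4%N v = (ps 1 v ^+ 4 - 6 * ps 1 v ^+ 2 * ps 2 v + 3 * ps 2 v ^+ 2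
                   + 8 * ps 1 v * ps 3 v - 6 * ps 4 v) / 24].
Proof.
elim: m v => [|m IH] v.
  by rewrite /ps !big_ord0 !elsym_0; split; field.
have [h1 h2 h3 h4] := IH (fun i => v (widen_ord (leqnSn m) i)).
rewrite !elsymSS h1 h2 h3 h4 elsym0 /ps !big_ord_recr /=.
rewrite /ps in h1 h2 h3 h4.
rewrite !expr1.
split; field.
all: by [] .
Qed.

End S.
Arguments ps {R m}.
Section T.
Variable R : realFieldType.
Variable n : nat.
Local Notation N := (n.+1%:R : R).

Lemma NE : N = n%:R + 1. Proof. by rewrite -natr1. Qed.
Lemma Nneq0 : N != 0. Proof. by rewrite pnatr_eq0. Qed.

Lemma PsqE (v : 'I_n.+1 -> R) : Psq v = ps 2 v. Proof. by []. Qed.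
Lemma ps1E (v : 'I_n.+1 -> R) : \sum_i v i = ps 1 v.
Proof. by rewrite /ps; apply: eq_bigr => i _; rewrite expr1. Qed.

Lemma g1E (v : 'I_n.+1 -> R) : g1 v = 3 * Psq v / (2 * N) * ps 1 v - ps 3 v / 2.
Proof.
rewrite /g1 /ps /ut mulr_sumr mulr_suml -sumrB; apply: eq_bigr => i _.
rewrite !exprS expr0; ring.
Qed.

Lemma sumuE (v : 'I_n.+1 -> R) :
  \sum_i u v i ^+ 2 = N * ((2 + Psq v) / (2 * N)) ^+ 2
     - (2 + Psq v) / (2 * N) * ps 2 v + ps 4 v / 4.
Proof.
rewrite /u /ps.
set a := (2 + Psq v) / (2 * N).
rewrite mulr_sumr mulr_suml.
have -> : N * a ^+ 2 = \sum_(i < n.+1) a ^+ 2.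
  by rewrite sumr_const card_ord mulr_natl.
rewrite -sumrB -big_split /=; apply: eq_bigr => i _; rewrite !exprS expr0.
rewrite !expr0 !mulr1. field. by [].
Qed.
End T.

Section M.
Variable R : realFieldType.
Variable n : nat.
Local Notation N := (n.+1%:R : R).

Lemma equivS (v : 'I_n.+1 -> R) : Sorig v <-> Ssym v.
Proof.
have [h1 h2 h3 h4] := @newton _ _ v.
rewrite /Sorig /Ssym g1E PsqE ps1E h1 h2 h3.
split => [[A [B C]]|[B [C D]]].
  rewrite B C mulr0 sub0r in A *; split => //.
  rewrite !expr0n /= ?mulr0 ?mul0r ?subr0 ?sub0r ?add0r; split; lra.
rewrite B !expr0n /= ?sub0r in C D *.
rewrite ?mulr0 ?mul0r ?subr0 ?sub0r ?add0r in D.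
have C' : ps 2 v = 1 by lra.
rewrite C'; split => //.
have D' : ps 3 v = 0 by lra.
by rewrite D' mulr0 mul0r subr0.
Qed.

Lemma fval (v : 'I_n.+1 -> R) : Sorig v ->
  fobj v = 9 * (n%:R - 1) / (8 * N) - elsym 4%N v.
Proof.
move=> hS; have hS' := hS; rewrite equivS in hS'.
have [h1 h2 h3 h4] := @newton _ _ v.
move: hS hS' => [_ [B C]] [D1 [D2 D3]].
rewrite ps1E in B; rewrite PsqE in C.
have E3 : ps 3 v = 0.
  by rewrite h3 B C in D3; lra.
rewrite /fobj sumuE /u PsqE C h4 B C E3.
have -> : (n%:R : R) = N - 1 by rewrite (@NE R n); ring.
field; by rewrite addrC natr1 pnatr_eq0.
Qed.
End M.

Theorem mainTheorem9 (R : realFieldType) (n : nat) (hn : (1 <= n)%N) :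
  (forall v : 'I_n.+1 -> R, Sorig v <-> Ssym v) /\
  (forall v : 'I_n.+1 -> R, Sorig v ->
     fobj v = 9 * (n%:R - 1) / (8 * n.+1%:R) - elsym 4%N v) /\
  (forall v : 'I_n.+1 -> R,
     loc_min_on (@Sorig R n) (@fobj R n) v <->
     loc_max_on (@Ssym R n) (@elsym R n.+1 4%N) v) /\
  (forall v : 'I_n.+1 -> R,
     loc_max_on (@Sorig R n) (@fobj R n) v <->
     loc_min_on (@Ssym R n) (@elsym R n.+1 4%N) v).
Proof.
split; first exact: equivS.
split; first exact: fval.
split => v; split => [[hv [e [he H]]]|[hv [e [he H]]]]; split;
  try (by apply/equivS); exists e; split => // w hw hd.
all: have hvS : Sorig v by (exact: hv) || (by apply/equivS).
all: have hwS : Sorig w by (exact: hw) || (by apply/equivS).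
all: have := H w ltac:(by (exact: hw) || (by apply/equivS)) hd.
all: by rewrite !fval // lerD2l lerN2.
Qed.
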